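(* Let $S$ be a commutative ring. (1) Given $t,\delta\in S$, every $n\in V[1,t,\delta]$ has the form $n=-\det[X,Y]$ for some $X,Y\in\mathbb{M}_2(S)$ with $\operatorname{tr}(X)=t$ and $\det(X)=\delta$. (2) Let $X=\begin{pmatrix}a&b\\c&d\end{pmatrix}\in\mathbb{M}_2(S)$, $t=\operatorname{tr}(X)$, $\delta=\det(X)$, $\Delta=t^2-4\delta$. Then for every $Y\in\mathbb{M}_2(S)$: $-c^2\det[X,Y]\in V[1,t,\delta]$ and $-4c^2\det[X,Y]\in V[1,-\Delta]$. (3) With notation as in (2), if moreover $\operatorname{tr}(X)$ and $\operatorname{tr}(Y)$ both lie in $2S$, then $-c^2\det[X,Y]\in V[1,-\Delta]$.
   Context: $[X,Y]=XY-YX$. For $s,t,\delta\in S$, $V[s,t,\delta]=\{s r_1^2+t r_1r_2+\delta r_2^2 : r_1,r_2\in S\}$, and $V[s,\delta]:=V[s,0,\delta]$. *)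

(* Defs.v *)
From HB Require Import structures.
From mathcomp Require Import all_boot all_order all_algebra.
Set Implicit Arguments. Unset Strict Implicit. Unset Printing Implicit Defensive.
Import GRing.Theory.
Local Open Scope ring_scope.

Definition lie_mx (S : comPzRingType) (n : nat) (X Y : 'M[S]_n) : 'M[S]_n :=
  X *m Y - Y *m X.

Definition Vset (S : comPzRingType) (s t d : S) : S -> Prop :=
  fun n => exists r1 r2 : S, n = s * r1 ^+ 2 + t * r1 * r2 + d * r2 ^+ 2.

Definition Vset2 (S : comPzRingType) (s d : S) : S -> Prop := Vset s 0 d.

(* Main.v *)
Require Import Defs.
From HB Require Import structures.
From mathcomp Require Import all_boot all_order all_algebra.
From Stdlib Require Import Ring.
Import GRing.Theory.
Local Open Scope ring_scope.

Section Aux.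
Variable S : comPzRingType.
Definition pl (x y : S) : S := x + y.
Definition ml (x y : S) : S := x * y.
Definition ng (x : S) : S := - x.
Definition sb (x y : S) : S := x - y.
Definition z0 : S := 0.
Definition o1 : S := 1.
Lemma plE (x y : S) : x + y = pl x y. Proof. by []. Qed.
Lemma mlE (x y : S) : x * y = ml x y. Proof. by []. Qed.
Lemma ngE (x : S) : - x = ng x. Proof. by []. Qed.
Lemma Sring : @ring_theory S z0 o1 pl ml sb ng eq.
Proof.
constructor=> //; rewrite /pl /ml /sb /ng /z0 /o1.
- exact: add0r. - exact: addrC. - exact: addrA. - exact: mul1r. - exact: mulrC.
- exact: mulrA. - exact: mulrDl. - exact: subrr.
Qed.
Add Ring Sring : Sring.
Lemma four : (4%:R : S) = 1 + 1 + 1 + 1.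
Proof. by rewrite !mulrS mulr0n addr0 !addrA. Qed.
Lemma two : (2%:R : S) = 1 + 1.
Proof. by rewrite !mulrS mulr0n addr0. Qed.
Ltac sring := rewrite ?four ?two ?expr2 ?plE ?mlE ?ngE; rewrite -?/o1 -?/z0;
  match goal with |- ?l = ?r => change (@eq S l r) end; ring.

Lemma det22 (A : 'M[S]_2) : \det A = A 0 0 * A 1 1 - A 0 1 * A 1 0.
Proof.
rewrite (expand_det_row _ 0) !big_ord_recl big_ord0 /cofactor !det_mx11 /=.
rewrite !mxE /=.
have e1 : (lift 0 0 : 'I_2) = 1 by apply/val_inj.
have e2 : (lift ord0 0 : 'I_2) = 1 by apply/val_inj.
have e3 : (lift ord0 ord0 : 'I_2) = 1 by apply/val_inj.
have e4 : (lift (lift ord0 ord0) 0 : 'I_2) = 0 by apply/val_inj.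
have e5 : (ord0 : 'I_2) = 0 by apply/val_inj.
rewrite ?e1 ?e2 ?e3 ?e4 ?e5 ?add0n /bump /= expr0 expr1 addr0 mul1r mulN1r mulrN.
have e6 : (lift 1 0 : 'I_2) = 0 by apply/val_inj.
by rewrite e6.
Qed.

Lemma tr22 (A : 'M[S]_2) : \tr A = A 0 0 + A 1 1.
Proof.
rewrite /mxtrace !big_ord_recl big_ord0 addr0.
have e3 : (lift ord0 ord0 : 'I_2) = 1 by apply/val_inj.
have e5 : (ord0 : 'I_2) = 0 by apply/val_inj.
by rewrite ?e3 ?e5.
Qed.

Lemma mul22 (A B : 'M[S]_2) i j : (A *m B) i j = A i 0 * B 0 j + A i 1 * B 1 j.
Proof.
rewrite !mxE !big_ord_recl big_ord0 addr0.
have e3 : (lift ord0 ord0 : 'I_2) = 1 by apply/val_inj.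
have e5 : (ord0 : 'I_2) = 0 by apply/val_inj.
by rewrite ?e3 ?e5.
Qed.

Lemma subE (A B : 'M[S]_2) i j : (A - B) i j = A i j - B i j.
Proof. by rewrite !mxE. Qed.

Definition Qf (a b c d e f g h : S) : S :=
  (b*g - c*f)^+2 + (f*(a-d) - b*(e-h))*(c*(e-h) - g*(a-d)).

Lemma negdet_lie (X Y : 'M[S]_2) :
  - \det (lie_mx X Y) = Qf (X 0 0) (X 0 1) (X 1 0) (X 1 1) (Y 0 0) (Y 0 1) (Y 1 0) (Y 1 1).
Proof.
rewrite det22 /lie_mx !subE !mul22 /Qf.
move: (X 0 0) (X 0 1) (X 1 0) (X 1 1) (Y 0 0) (Y 0 1) (Y 1 0) (Y 1 1).
move=> a b c d e f g h.
sring.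
Qed.

Lemma part1 (t d n : S) : Vset 1 t d n ->
     exists X Y : 'M[S]_2,
       \tr X = t /\ \det X = d /\ n = - \det (lie_mx X Y).
Proof.
case=> r1 [r2 ->].
pose X : 'M[S]_2 := \matrix_(i < 2, j < 2)
  (if (i : nat) == 0%N then (if (j : nat) == 0%N then 0 else - d)
   else (if (j : nat) == 0%N then 1 else t)).
pose Y : 'M[S]_2 := \matrix_(i < 2, j < 2)
  (if (i : nat) == 0%N then (if (j : nat) == 0%N then - r2 else r1) else 0).
exists X, Y.
rewrite tr22 det22 negdet_lie /Qf !mxE /=.
split; [|split]; sring.
Qed.

Lemma part2 (X Y : 'M[S]_2) :
     let c := X 1 0 in
     let t := \tr X in let d := \det X in
     let Delta := t ^+ 2 - 4%:R * d in
     Vset 1 t d (- (c ^+ 2 * \det (lie_mx X Y))) /\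
     Vset2 1 (- Delta) (- (4%:R * c ^+ 2 * \det (lie_mx X Y))).
Proof.
cbv zeta. rewrite /Vset2 /Vset -!mulrN negdet_lie tr22 det22 /Qf.
move: (X 0 0) (X 0 1) (X 1 0) (X 1 1) (Y 0 0) (Y 0 1) (Y 1 0) (Y 1 1).
move=> a b c d e f g h.
set R1 := c*a*(e-h) + f*c^+2 - g*(a^+2 - a*d + b*c).
set R2 := - (c*(e-h) - g*(a-d)).
split.
- exists R1, R2. rewrite /R1 /R2. sring.
- exists ((1+1)*R1 + (a+d)*R2), R2. rewrite /R1 /R2. sring.
Qed.

Lemma part3 (X Y : 'M[S]_2) :
     let c := X 1 0 in
     let t := \tr X in let d := \det X in
     let Delta := t ^+ 2 - 4%:R * d in
     (exists u : S, \tr X = 2%:R * u) ->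
     (exists v : S, \tr Y = 2%:R * v) ->
     Vset2 1 (- Delta) (- (c ^+ 2 * \det (lie_mx X Y))).
Proof.
cbv zeta. rewrite /Vset2 /Vset -!mulrN negdet_lie !tr22 det22 /Qf.
move: (X 0 0) (X 0 1) (X 1 0) (X 1 1) (Y 0 0) (Y 0 1) (Y 1 0) (Y 1 1).
move=> a b c d e f g h [u hu] [v hv].
have ha : a = 2%:R * u - d by rewrite -hu addrK.
have he : e = 2%:R * v - h by rewrite -hv addrK.
rewrite ha he.
set R1 := c*(2%:R * u - d)*((2%:R * v - h)-h) + f*c^+2
   - g*((2%:R * u - d)^+2 - (2%:R * u - d)*d + b*c).
set R2 := - (c*(v-h) - g*(u-d)).
exists (R1 + u * (R2 + R2)), R2. rewrite /R1 /R2. sring.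
Qed.

End Aux.

Theorem theorem5p10 (S : comPzRingType) :
  (* (1) *)
  (forall (t d n : S), Vset 1 t d n ->
     exists X Y : 'M[S]_2,
       \tr X = t /\ \det X = d /\ n = - \det (lie_mx X Y)) /\
  (* (2) *)
  (forall X Y : 'M[S]_2,
     let c := X 1 0 in
     let t := \tr X in let d := \det X in
     let Delta := t ^+ 2 - 4%:R * d in
     Vset 1 t d (- (c ^+ 2 * \det (lie_mx X Y))) /\
     Vset2 1 (- Delta) (- (4%:R * c ^+ 2 * \det (lie_mx X Y)))) /\
  (* (3) *)
  (forall X Y : 'M[S]_2,
     let c := X 1 0 in
     let t := \tr X in let d := \det X in
     let Delta := t ^+ 2 - 4%:R * d in
     (exists u : S, \tr X = 2%:R * u) ->
     (exists v : S, \tr Y = 2%:R * v) ->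
     Vset2 1 (- Delta) (- (c ^+ 2 * \det (lie_mx X Y)))).
Proof.
split; first exact: part1.
split; [exact: part2 | exact: part3].
Qed.
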